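(* For all integers $0<i<j$, $Q^i<Q^j$ as unifiers of $[1]p$ in $\mathbf{GLP}$, where $Q^i$ denotes the substitution $p\mapsto Q^i(p)$; that is, $Q^i\leq Q^j$ but not $Q^j\leq Q^i$.
   Context: $\mathbf{GLP}$ is the propositional polymodal logic with modalities $[0],[1],\dots$ ($\langle k\rangle:=\neg[k]\neg$) axiomatized by classical tautologies; $[k](\phi\to\psi)\to([k]\phi\to[k]\psi)$; $[k]([k]\phi\to\phi)\to[k]\phi$; $\langle j\rangle\phi\to[k]\langle j\rangle\phi$ for $j<k$; $[j]\phi\to[k]\phi$ for $j\leq k$; rules modus ponens and necessitation. A substitution commutes with all connectives and modalities. $\tau\leq\sigma$ means there is a substitution $\theta$ with $\mathbf{GLP}\vdash\tau(q)\leftrightarrow\theta(\sigma(q))$ for every variable $q$; $\sigma<\tau$ means $\sigma\leq\tau$ and not $\tau\leq\sigma$. Define $Q_1(p):=p$, $Q_{i+1}(p):=p\lor[0]Q_i(p)$, $Q^n(p):=\bigwedge_{i=1}^n([0]Q_i(p)\to Q_i(p))$. *)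

(* Defs.v *)
From Stdlib Require Import Arith.

Inductive form : Type :=
| Var : nat -> form
| Bot : form
| Imp : form -> form -> form
| Box : nat -> form -> form.

Definition Neg (a : form) : form := Imp a Bot.
Definition Top : form := Imp Bot Bot.
Definition Or (a b : form) : form := Imp (Neg a) b.
Definition And (a b : form) : form := Neg (Imp a (Neg b)).
Definition Iff (a b : form) : form := And (Imp a b) (Imp b a).
Definition Dia (k : nat) (a : form) : form := Neg (Box k (Neg a)).

(* Boolean evaluation treating variables and boxed formulas as atoms;
   a classical tautology (instance) is a formula true under all such
   evaluations. *)
Fixpoint beval (v : form -> bool) (a : form) : bool :=
  match a with
  | Var n => v (Var n)
  | Bot => false
  | Imp a b => orb (negb (beval v a)) (beval v b)
  | Box k b => v (Box k b)
  end.

Definition Taut (a : form) : Prop := forall v, beval v a = true.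

Inductive GLP : form -> Prop :=
| ax_taut : forall a, Taut a -> GLP a
| ax_K : forall k a b, GLP (Imp (Box k (Imp a b)) (Imp (Box k a) (Box k b)))
| ax_Lob : forall k a, GLP (Imp (Box k (Imp (Box k a) a)) (Box k a))
| ax_neg : forall j k a, j < k -> GLP (Imp (Dia j a) (Box k (Dia j a)))
| ax_mono : forall j k a, j <= k -> GLP (Imp (Box j a) (Box k a))
| r_mp : forall a b, GLP (Imp a b) -> GLP a -> GLP b
| r_nec : forall k a, GLP a -> GLP (Box k a).

Definition subst := nat -> form.

Fixpoint apply (s : subst) (a : form) : form :=
  match a with
  | Var n => s n
  | Bot => Bot
  | Imp a b => Imp (apply s a) (apply s b)
  | Box k b => Box k (apply s b)
  end.

Definition sub_le (tau sigma : subst) : Prop :=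
  exists theta : subst, forall q : nat, GLP (Iff (tau q) (apply theta (sigma q))).

Definition sub_lt (sigma tau : subst) : Prop :=
  sub_le sigma tau /\ ~ sub_le tau sigma.

(* Q_i(p), for i >= 1: Q_1 = p, Q_{i+1} = p \/ [0] Q_i  (Q 0 is junk = p). *)
Fixpoint Q (i : nat) (p : form) : form :=
  match i with
  | 0 => p
  | 1 => p
  | S i' => Or p (Box 0 (Q i' p))
  end.

Definition Qc (i : nat) (p : form) : form := Imp (Box 0 (Q i p)) (Q i p).

Fixpoint Qup (n : nat) (p : form) : form :=
  match n with
  | 0 => Top
  | 1 => Qc 1 p
  | S n' => And (Qup n' p) (Qc n p)
  end.

Definition pvar : nat := 0.
Definition QS (n : nat) : subst :=
  fun q => if Nat.eqb q pvar then Qup n (Var pvar) else Var q.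

(* Main.v *)
Require Import Defs.
From Stdlib Require Import Arith Lia Bool List.

Ltac tautt := intro v; simpl;
  repeat match goal with
  | |- context[beval ?v ?x] => destruct (beval v x)
  | |- context[?v (Box ?k ?x)] => destruct (v (Box k x))
  | |- context[?v (Var ?k)] => destruct (v (Var k))
  end; reflexivity.

Lemma mp1 a b : Taut (Imp a b) -> GLP a -> GLP b.
Proof. intros T H. eapply r_mp; [apply ax_taut, T | exact H]. Qed.
Lemma mp2 a1 a2 b : Taut (Imp a1 (Imp a2 b)) -> GLP a1 -> GLP a2 -> GLP b.
Proof. intros T H1 H2. eapply r_mp; [eapply r_mp; [apply ax_taut, T | exact H1]| exact H2]. Qed.
Lemma mp3 a1 a2 a3 b : Taut (Imp a1 (Imp a2 (Imp a3 b))) -> GLP a1 -> GLP a2 -> GLP a3 -> GLP b.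
Proof. intros T H1 H2 H3. eapply r_mp; [eapply mp2; [exact T|exact H1|exact H2] | exact H3]. Qed.

Lemma imp_refl a : GLP (Imp a a).
Proof. apply ax_taut. tautt. Qed.
Lemma imp_trans a b c : GLP (Imp a b) -> GLP (Imp b c) -> GLP (Imp a c).
Proof. apply mp2. tautt. Qed.
Lemma box_mono k a b : GLP (Imp a b) -> GLP (Imp (Box k a) (Box k b)).
Proof. intro H. eapply r_mp; [apply ax_K | apply r_nec, H]. Qed.
Lemma or_mono a b x y : GLP (Imp a b) -> GLP (Imp x y) -> GLP (Imp (Or a x) (Or b y)).
Proof. apply mp2. tautt. Qed.

Lemma Q_mono_arg k a b : GLP (Imp a b) -> GLP (Imp (Q k a) (Q k b)).
Proof.
  intro H. induction k as [|k IH]; [exact H|].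
  destruct k as [|k]; [exact H|].
  change (GLP (Imp (Or a (Box 0 (Q (S k) a))) (Or b (Box 0 (Q (S k) b))))).
  apply or_mono; [exact H | apply box_mono, IH].
Qed.

Lemma Q_step k a : 1 <= k -> GLP (Imp (Q k a) (Q (S k) a)).
Proof.
  induction k as [|k IH]; intro Hk; [lia|].
  destruct k as [|k].
  - change (GLP (Imp a (Or a (Box 0 a)))). apply ax_taut; tautt.
  - change (GLP (Imp (Or a (Box 0 (Q (S k) a))) (Or a (Box 0 (Q (S (S k)) a))))).
    apply or_mono; [apply imp_refl | apply box_mono, IH; lia].
Qed.

Lemma Q_le i j a : 1 <= i -> i <= j -> GLP (Imp (Q i a) (Q j a)).
Proof.
  intros Hi Hij. induction Hij; [apply imp_refl|].
  eapply imp_trans; [exact IHHij | apply Q_step; lia].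
Qed.

Lemma Qup_eq n a : 1 <= n -> GLP (Iff (Qup n a) (Or a (Neg (Box 0 (Q n a))))).
Proof.
  induction n as [|n IH]; intro Hn; [lia|].
  destruct n as [|n].
  - change (GLP (Iff (Imp (Box 0 a) a) (Or a (Neg (Box 0 a))))). apply ax_taut; tautt.
  - change (GLP (Iff (And (Qup (S n) a) (Imp (Box 0 (Q (S (S n)) a)) (Or a (Box 0 (Q (S n) a)))))
                     (Or a (Neg (Box 0 (Q (S (S n)) a)))))).
    eapply mp2; [| apply IH; lia | apply (box_mono 0 _ _ (Q_step (S n) a ltac:(lia)))].
    tautt.
Qed.

Lemma apply_Q s k a : apply s (Q k a) = Q k (apply s a).
Proof.
  induction k as [|k IH]; [reflexivity|]. destruct k as [|k]; [reflexivity|].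
  change (apply s (Or a (Box 0 (Q (S k) a))) = Or (apply s a) (Box 0 (Q (S k) (apply s a)))).
  simpl. simpl in IH. rewrite IH. reflexivity.
Qed.

Lemma apply_Qup s n a : apply s (Qup n a) = Qup n (apply s a).
Proof.
  induction n as [|n IH]; [reflexivity|]. destruct n as [|n].
  - reflexivity.
  - change (apply s (And (Qup (S n) a) (Qc (S (S n)) a)) = And (Qup (S n) (apply s a)) (Qc (S (S n)) (apply s a))).
    unfold Qc. simpl. simpl in IH. rewrite IH.
    pose proof (apply_Q s (S (S n)) a) as E. simpl in E. rewrite E. reflexivity.
Qed.

Lemma part1 i j : 0 < i -> i <= j -> sub_le (QS i) (QS j).
Proof.
  intros Hi Hij.
  exists (fun q => if Nat.eqb q pvar then Qup i (Var pvar) else Var q).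
  intro q. unfold QS. destruct (Nat.eqb q pvar) eqn:E.
  - rewrite apply_Qup. simpl. unfold pvar.
    set (A := Qup i (Var 0)).
    assert (EA := Qup_eq i (Var 0) Hi). fold A in EA.
    assert (EJ := Qup_eq j A ltac:(lia)).
    assert (F : GLP (Imp (Box 0 (Q i (Var 0))) (Box 0 (Q j A)))).
    { apply box_mono. eapply imp_trans; [apply Q_mono_arg | apply Q_le; lia].
      eapply mp1; [| exact EA]. tautt. }
    eapply mp3; [| exact EA | exact EJ | exact F]. tautt.
  - simpl. rewrite E. apply ax_taut. tautt.
Qed.

Fixpoint sem (N : nat) (V : nat -> nat -> bool) (a : form) (x : nat) : bool :=
  match a with
  | Var n => V n x
  | Bot => false
  | Imp a b => orb (negb (sem N V a x)) (sem N V b x)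
  | Box k b => match k with
               | 0 => forallb (fun y => sem N V b y) (seq (S x) (N - S x))
               | S _ => true
               end
  end.

Lemma sem_imp N V a b x : sem N V (Imp a b) x = orb (negb (sem N V a x)) (sem N V b x).
Proof. reflexivity. Qed.

Lemma boxP N V b x : sem N V (Box 0 b) x = true <-> (forall y, x < y < N -> sem N V b y = true).
Proof.
  simpl. rewrite forallb_forall. split; intros H y Hy.
  - apply H. apply in_seq. lia.
  - apply in_seq in Hy. apply H. lia.
Qed.

Lemma beval_sem N V x a : beval (fun f => sem N V f x) a = sem N V a x.
Proof. induction a; simpl; try reflexivity. rewrite IHa1, IHa2. reflexivity. Qed.

Lemma sound N V a : GLP a -> forall x, sem N V a x = true.
Proof.
  induction 1; intro x.
  - rewrite <- beval_sem. apply H.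
  - destruct k; [|reflexivity].
    rewrite !sem_imp.
    destruct (sem N V (Box 0 (Imp a b)) x) eqn:E1; [|reflexivity].
    destruct (sem N V (Box 0 a) x) eqn:E2; [|reflexivity].
    destruct (sem N V (Box 0 b) x) eqn:E3; [reflexivity|]. exfalso.
    assert (sem N V (Box 0 b) x = true); [|congruence].
    apply boxP. intros y Hy. rewrite boxP in E1, E2. specialize (E1 y Hy). specialize (E2 y Hy).
    rewrite sem_imp, E2 in E1. exact E1.
  - destruct k; [|reflexivity].
    rewrite !sem_imp. destruct (sem N V (Box 0 (Imp (Box 0 a) a)) x) eqn:E1; [|reflexivity].
    cbn [orb negb]. rewrite boxP in E1. apply boxP.
    assert (forall m y, N - y <= m -> x < y < N -> sem N V a y = true) as K.
    { induction m; intros y Hm Hy; [lia|].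
      specialize (E1 y Hy). rewrite sem_imp in E1.
      destruct (sem N V (Box 0 a) y) eqn:E3.
      - exact E1.
      - exfalso. assert (sem N V (Box 0 a) y = true) as C; [|congruence].
        apply boxP. intros z Hz. apply IHm; lia. }
    intros y Hy. apply (K (N - y)); lia.
  - destruct k; [lia|]. simpl. apply orb_true_r.
  - destruct k.
    + assert (j = 0) by lia. subst. rewrite !sem_imp. destruct (sem N V (Box 0 a) x); reflexivity.
    + simpl. apply orb_true_r.
  - specialize (IHGLP1 x). specialize (IHGLP2 x). simpl in IHGLP1. rewrite IHGLP2 in IHGLP1. exact IHGLP1.
  - destruct k; [|reflexivity]. apply boxP. intros; auto.
Qed.

Lemma sem_or N V a b x : sem N V (Or a b) x = orb (sem N V a x) (sem N V b x).
Proof. simpl. destruct (sem N V a x); reflexivity. Qed.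
Lemma sem_and N V a b x : sem N V (And a b) x = andb (sem N V a x) (sem N V b x).
Proof. simpl. destruct (sem N V a x), (sem N V b x); reflexivity. Qed.
Lemma sem_iff N V a b x : sem N V (Iff a b) x = true -> sem N V a x = sem N V b x.
Proof. simpl. destruct (sem N V a x), (sem N V b x); simpl; congruence. Qed.

Lemma Q_true N V k a x : 1 <= k -> sem N V a x = true -> sem N V (Q k a) x = true.
Proof.
  intros Hk H. destruct k as [|k]; [lia|]. destruct k as [|k]; [exact H|].
  change (sem N V (Or a (Box 0 (Q (S k) a))) x = true). rewrite sem_or, H. reflexivity.
Qed.

Lemma Qup_false N V n a x : 1 <= n -> sem N V (Qup n a) x = false -> sem N V a x = false.
Proof.
  intros Hn H. destruct (sem N V a x) eqn:E; [|reflexivity]. exfalso.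
  assert (sem N V (Qup n a) x = true); [|congruence].
  clear H. induction n as [|n IH]; [lia|].
  assert (Qc_t : sem N V (Qc (S n) a) x = true).
  { unfold Qc. rewrite !sem_imp. rewrite (Q_true N V (S n) a x ltac:(lia) E). apply orb_true_r. }
  destruct n as [|n]; [exact Qc_t|].
  change (sem N V (And (Qup (S n) a) (Qc (S (S n)) a)) x = true).
  rewrite sem_and, Qc_t, IH; [reflexivity|lia].
Qed.

Lemma Q_char N V a : (forall y, y < N -> sem N V a y = false) ->
  forall k x, 1 <= k -> x < N -> sem N V (Q k a) x = (N - x <? k).
Proof.
  intros Ha k. induction k as [|k IH]; intros x Hk Hx; [lia|].
  destruct k as [|k].
  - simpl Q. rewrite Ha by lia. symmetry. apply Nat.ltb_ge. lia.
  - change (sem N V (Or a (Box 0 (Q (S k) a))) x = (N - x <? S (S k))).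
    rewrite sem_or, Ha by lia. cbn [orb].
    destruct (N - x <? S (S k)) eqn:E.
    + apply Nat.ltb_lt in E. apply boxP. intros y Hy. rewrite IH by lia. apply Nat.ltb_lt. lia.
    + apply Nat.ltb_ge in E. destruct (sem N V (Box 0 (Q (S k) a)) x) eqn:B; [|reflexivity].
      rewrite boxP in B. specialize (B (S x) ltac:(lia)). rewrite IH in B by lia.
      apply Nat.ltb_lt in B. lia.
Qed.

Lemma Qc_char N V a : (forall y, y < N -> sem N V a y = false) ->
  forall k x, 1 <= k -> x < N -> sem N V (Qc k a) x = negb (N - x =? k).
Proof.
  intros Ha k x Hk Hx. unfold Qc. rewrite !sem_imp.
  rewrite (Q_char N V a Ha k x Hk Hx).
  destruct (N - x =? k) eqn:E.
  - apply Nat.eqb_eq in E.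
    assert (B : sem N V (Box 0 (Q k a)) x = true).
    { apply boxP. intros y Hy. rewrite (Q_char N V a Ha) by lia. apply Nat.ltb_lt. lia. }
    rewrite B. simpl. apply Nat.ltb_ge. lia.
  - apply Nat.eqb_neq in E.
    destruct (N - x <? k) eqn:L; [apply orb_true_r|].
    apply Nat.ltb_ge in L. rewrite orb_false_r.
    destruct (sem N V (Box 0 (Q k a)) x) eqn:B; [|reflexivity].
    rewrite boxP in B. specialize (B (S x) ltac:(lia)). rewrite (Q_char N V a Ha) in B by lia.
    apply Nat.ltb_lt in B. lia.
Qed.

Lemma Qup_char N V a : (forall y, y < N -> sem N V a y = false) ->
  forall n x, 1 <= n -> x < N -> sem N V (Qup n a) x = (n <? N - x).
Proof.
  intros Ha n. induction n as [|n IH]; intros x Hn Hx; [lia|].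
  destruct n as [|n].
  - change (sem N V (Qc 1 a) x = (1 <? N - x)). rewrite (Qc_char N V a Ha) by lia.
    destruct (N - x =? 1) eqn:E; destruct (1 <? N - x) eqn:F; try reflexivity;
    [apply Nat.eqb_eq in E; apply Nat.ltb_lt in F | apply Nat.eqb_neq in E; apply Nat.ltb_ge in F]; lia.
  - change (sem N V (And (Qup (S n) a) (Qc (S (S n)) a)) x = (S (S n) <? N - x)).
    rewrite sem_and, (Qc_char N V a Ha) by lia. rewrite IH by lia.
    destruct (S n <? N - x) eqn:E1; destruct (N - x =? S (S n)) eqn:E2;
      destruct (S (S n) <? N - x) eqn:E3; try reflexivity;
    repeat match goal with
    | H : (_ <? _) = true |- _ => apply Nat.ltb_lt in H
    | H : (_ <? _) = false |- _ => apply Nat.ltb_ge in H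
    | H : (_ =? _) = true |- _ => apply Nat.eqb_eq in H
    | H : (_ =? _) = false |- _ => apply Nat.eqb_neq in H
    end; lia.
Qed.

Lemma part2 i j : 0 < i -> i < j -> ~ sub_le (QS j) (QS i).
Proof.
  intros Hi Hij [theta Ht]. specialize (Ht 0). unfold QS in Ht. simpl in Ht.
  rewrite apply_Qup in Ht. simpl in Ht. unfold pvar in Ht.
  set (N := j). set (V := fun (_ _ : nat) => false).
  assert (Hp : forall y, y < N -> sem N V (Var 0) y = false) by reflexivity.
  assert (Hf : forall y, y < N -> sem N V (Qup i (theta 0)) y = false).
  { intros y Hy. rewrite <- (sem_iff N V _ _ y (sound N V _ Ht y)).
    rewrite (Qup_char N V _ Hp) by lia. apply Nat.ltb_ge. unfold N. lia. }
  assert (Ha : forall y, y < N -> sem N V (theta 0) y = false).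
  { intros y Hy. apply (Qup_false N V i); [lia|]. apply Hf, Hy. }
  specialize (Hf 0 ltac:(unfold N; lia)).
  rewrite (Qup_char N V _ Ha) in Hf by (unfold N; lia).
  apply Nat.ltb_ge in Hf. unfold N in Hf. lia.
Qed.

Theorem mainTheorem14 : forall i j : nat, 0 < i -> i < j -> sub_lt (QS i) (QS j).
Proof.
  intros i j Hi Hij. split.
  - apply part1; lia.
  - apply part2; assumption.
Qed.
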